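(* Let $0<\mu_1<1$, $\lambda_G>0$, set $\mu_2:=\lambda_G$ and $\mu_3:=\frac{\mu_1}{\mu_2(1+2\mu_1)}$, and let $p\ge1$ be an integer. Let $q\le p$ and let $(\mathbf s_i,\mathbf y_i)$, $i=1,\dots,q$, be vectors in $\mathbb{R}^d$ each of which is the output $(\tilde{\mathbf s},\tilde{\mathbf y})$ of the damping procedure $D_{P(I)}D_{LM}$ (with parameters $\mu_1,\mu_2$) applied to some input pair $(\mathbf s,\mathbf y)\neq(0,0)$. Define $H_0:=\lambda_G^{-1}I$ and recursively, with $\rho_i=(\mathbf s_i^\top\mathbf y_i)^{-1}$, $$H_i=(I-\rho_i\mathbf s_i\mathbf y_i^\top)H_{i-1}(I-\rho_i\mathbf y_i\mathbf s_i^\top)+\rho_i\mathbf s_i\mathbf s_i^\top,\quad i=1,\dots,q.$$ Then $\underline\kappa_G I\preceq H_q\preceq\bar\kappa_G I$, where $$\underline\kappa_G:=\Big(\lambda_G+\frac{p}{\mu_3}\Big)^{-1},\qquad \bar\kappa_G:=\lambda_G^{-1}\hat\mu^p+\frac{\hat\mu^p-1}{\hat\mu-1}\cdot\frac1{\mu_2},\qquad \hat\mu:=\Big(1+\frac1{\sqrt{\mu_2\mu_3}}\Big)^2.$$ In particular, the L-BFGS matrices $H_G^l(k)$ built (with memory at most $p$) from such damped pairs are uniformly bounded above and below by positive multiples of the identity, independently of the iteration $k$.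
   Context: $D_{P(I)}D_{LM}$ with parameters $0<\mu_1<1$, $\mu_2>0$ maps $(\mathbf s,\mathbf y)$ to $(\tilde{\mathbf s},\tilde{\mathbf y})$ as follows: $\theta_1:=\frac{(1-\mu_1)\mathbf y^\top\mathbf y/\mu_2}{\mathbf y^\top\mathbf y/\mu_2-\mathbf s^\top\mathbf y}$ if $\mathbf s^\top\mathbf y<\mu_1\mathbf y^\top\mathbf y/\mu_2$ and $\theta_1:=1$ otherwise; $\tilde{\mathbf s}:=\theta_1\mathbf s+(1-\theta_1)\mu_2^{-1}\mathbf y$; $\tilde{\mathbf y}:=\mathbf y+\mu_2\tilde{\mathbf s}$. $\preceq$ denotes the Loewner order on symmetric matrices. *)

(* Defs.v *)
From HB Require Import structures.
From mathcomp Require Import all_boot all_order all_algebra.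
Set Implicit Arguments. Unset Strict Implicit. Unset Printing Implicit Defensive.
Import Order.TTheory GRing.Theory Num.Theory.
Local Open Scope ring_scope.

Section Defs.
Variables (R : rcfType) (d : nat).

Definition dotv (u v : 'cV[R]_d) : R := (u^T *m v) 0 0.

Definition loewner_le (A B : 'M[R]_d) : Prop :=
  forall x : 'cV[R]_d, 0 <= (x^T *m (B - A) *m x) 0 0.

Definition damp (mu1 mu2 : R) (s y : 'cV[R]_d) : 'cV[R]_d * 'cV[R]_d :=
  let theta1 :=
    if dotv s y < mu1 * dotv y y / mu2
    then ((1 - mu1) * dotv y y / mu2) / (dotv y y / mu2 - dotv s y)
    else 1 in
  let st := theta1 *: s + ((1 - theta1) / mu2) *: y in
  (st, y + mu2 *: st).

Definition bfgs_upd (H : 'M[R]_d) (s y : 'cV[R]_d) : 'M[R]_d :=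
  let rho := (dotv s y)^-1 in
  (1%:M - rho *: (s *m y^T)) *m H *m (1%:M - rho *: (y *m s^T))
  + rho *: (s *m s^T).

(* H_0 = lamG^-1 I, H_{i+1} = update of H_i with the pair (S i, Y i)
   (pairs indexed from 0, i.e. (S i, Y i) is the paper's (s_{i+1}, y_{i+1})) *)
Fixpoint Hseq (lamG : R) (S Y : nat -> 'cV[R]_d) (i : nat) : 'M[R]_d :=
  match i with
  | 0 => lamG^-1 *: 1%:M
  | i'.+1 => bfgs_upd (Hseq lamG S Y i') (S i') (Y i')
  end.

End Defs.

(* Main.v *)
Require Import Defs.
From HB Require Import structures.
From mathcomp Require Import all_boot all_order all_algebra.
From mathcomp Require Import ring lra.
Import Order.TTheory GRing.Theory Num.Theory.
Local Open Scope ring_scope.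

Section Aux.
Variables (R : rcfType) (d : nat).
Implicit Types (u v w x y s z : 'cV[R]_d) (H : 'M[R]_d).

Definition qf H x := (x^T *m H *m x) 0 0.

Lemma dotvE u v : dotv u v = \sum_i u i 0 * v i 0.
Proof. by rewrite /dotv !mxE; apply: eq_bigr => i _; rewrite !mxE. Qed.

Lemma dotvC u v : dotv u v = dotv v u.
Proof. rewrite !dotvE; apply: eq_bigr => i _; exact: mulrC. Qed.

Lemma dotvDl u v w : dotv (u + v) w = dotv u w + dotv v w.
Proof. rewrite !dotvE -big_split; apply: eq_bigr => i _; by rewrite mxE mulrDl. Qed.

Lemma dotvZl a u w : dotv (a *: u) w = a * dotv u w.
Proof. rewrite !dotvE mulr_sumr; apply: eq_bigr => i _; by rewrite mxE mulrA. Qed.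

Lemma dotvNl u w : dotv (- u) w = - dotv u w.
Proof. by rewrite -scaleN1r dotvZl mulN1r. Qed.

Lemma dotvBl u v w : dotv (u - v) w = dotv u w - dotv v w.
Proof. by rewrite dotvDl dotvNl. Qed.

Lemma dotvDr u v w : dotv w (u + v) = dotv w u + dotv w v.
Proof. by rewrite !(dotvC w) dotvDl. Qed.
Lemma dotvZr a u w : dotv w (a *: u) = a * dotv w u.
Proof. by rewrite !(dotvC w) dotvZl. Qed.
Lemma dotvBr u v w : dotv w (u - v) = dotv w u - dotv w v.
Proof. by rewrite !(dotvC w) dotvBl. Qed.
Lemma dotv0r u : dotv u 0 = 0.
Proof. by rewrite -(scale0r (0 : 'cV[R]_d)) dotvZr mul0r. Qed.

Lemma dotv_ge0 u : 0 <= dotv u u.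
Proof. rewrite dotvE; apply: sumr_ge0 => i _; by rewrite -expr2 sqr_ge0. Qed.

Lemma dotv_eq0 u : dotv u u = 0 -> u = 0.
Proof.
rewrite dotvE => h; apply/matrixP => i j; rewrite ord1 mxE.
have H0 : forall k : 'I_d, true -> 0 <= u k 0 * u k 0.
  by move=> k _; rewrite -expr2 sqr_ge0.
by have /eqP := psumr_eq0P H0 h (i:=i) isT; rewrite mulf_eq0 orbb => /eqP.
Qed.

Lemma dotv_sq u c v : dotv (u + c *: v) (u + c *: v) =
  dotv u u + 2 * c * dotv u v + c ^+ 2 * dotv v v.
Proof. rewrite !dotvDl !dotvDr !dotvZl !dotvZr (dotvC v u); ring. Qed.

Lemma CS u v : dotv u v ^+ 2 <= dotv u u * dotv v v.
Proof.
have [v0|vn] := eqVneq (dotv v v) 0.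
  rewrite (dotv_eq0 v v0) dotv0r expr0n /=. by rewrite mulr_ge0 ?dotv_ge0.
have vp : 0 < dotv v v by rewrite lt0r vn dotv_ge0.
have h := dotv_ge0 (dotv v v *: u - dotv u v *: v).
have e : dotv (dotv v v *: u - dotv u v *: v) (dotv v v *: u - dotv u v *: v)
  = dotv v v * (dotv v v * dotv u u - dotv u v ^+ 2).
  rewrite !dotvBl !dotvBr !dotvZl !dotvZr (dotvC v u); ring.
rewrite e (pmulr_rge0 _ vp) subr_ge0 in h. by rewrite mulrC.
Qed.

Lemma qfZ1 k x : qf (k *: 1%:M) x = k * dotv x x.
Proof. by rewrite /qf -scalemxAr mulmx1 -scalemxAl mxE. Qed.

Lemma loewnerE A B : loewner_le A B <-> forall x, qf A x <= qf B x.
Proof.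
rewrite /loewner_le /qf; split => h x; have := h x;
by rewrite mulmxBr mulmxBl !mxE subr_ge0.
Qed.

Lemma qf_upd H s y x : qf (bfgs_upd H s y) x =
  qf H (x - ((dotv s y)^-1 * dotv s x) *: y) + (dotv s y)^-1 * dotv s x ^+ 2.
Proof.
rewrite /qf /bfgs_upd /=; set r := (dotv s y)^-1.
have hsx : s^T *m x = (dotv s x)%:M by rewrite [LHS]mx11_scalar.
have hxs : x^T *m s = (dotv s x)%:M by rewrite [LHS]mx11_scalar dotvC.
have h1 : (1%:M - r *: (y *m s^T)) *m x = x - (r * dotv s x) *: y.
  by rewrite mulmxBl mul1mx -scalemxAl -mulmxA hsx mul_mx_scalar scalerA.
have h2 : x^T *m (1%:M - r *: (s *m y^T)) = (x - (r * dotv s x) *: y)^T.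
  by rewrite -h1 trmx_mul; congr (_ *m _); rewrite [RHS]linearB /= trmx1 [in RHS]linearZ /= trmx_mul trmxK.
rewrite (mulmxDr x^T) (mulmxDl _ _ x) mxE !mulmxA h2 -(mulmxA _ _ x) h1; congr (_ + _).
rewrite -scalemxAr -scalemxAl mxE (mulmxA x^T) hxs mul_scalar_mx -scalemxAl hsx.
by rewrite !mxE eqxx mulr1n expr2.
Qed.

Lemma post (mu1 mu2 : R) st y : 0 < mu1 -> 0 < mu2 ->
  mu1 * dotv y y <= mu2 * dotv st y -> 0 < dotv st y + mu2 * dotv st st ->
  (0 < dotv st (y + mu2 *: st)) /\ (mu2 * dotv st st <= dotv st (y + mu2 *: st)) /\ (mu1 / (mu2 * (1 + 2 * mu1)) * dotv (y + mu2 *: st) (y + mu2 *: st)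
    <= dotv st (y + mu2 *: st)).
Proof.
move=> m1 m2 h1 h2.
have e1 : dotv st (y + mu2 *: st) = dotv st y + mu2 * dotv st st.
  by rewrite dotvDr dotvZr.
rewrite dotv_sq e1 (dotvC y st).
have w0 := dotv_ge0 y; have s0 := dotv_ge0 st.
have t0 : 0 <= dotv st y.
  have : 0 <= mu2 * dotv st y by apply: le_trans h1; rewrite mulr_ge0 // ltW.
  by rewrite pmulr_rge0.
split => //; split; first by lra.
rewrite mulrAC ler_pdivrMr; last by rewrite mulr_gt0 //; lra.
have : 0 <= mu2 ^+ 2 * dotv st st * (1 + mu1).
  by rewrite !mulr_ge0 // ?exprn_ge0 //; lra.
nra.
Qed.

Lemma damp_ok (mu1 mu2 : R) s y st yt : 0 < mu1 -> mu1 < 1 -> 0 < mu2 ->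
  (s, y) != (0, 0) -> damp mu1 mu2 s y = (st, yt) ->
  (0 < dotv st yt) /\ (mu2 * dotv st st <= dotv st yt) /\ (mu1 / (mu2 * (1 + 2 * mu1)) * dotv yt yt <= dotv st yt).
Proof.
move=> m1 m1' m2 nz; rewrite /damp /=.
case: ifP => hc [<- <-].
- set th := ((1 - mu1) * dotv y y / mu2) / (dotv y y / mu2 - dotv s y).
  have wp : 0 < dotv y y.
    rewrite lt0r dotv_ge0 andbT; apply/eqP => w0; move: hc.
    have -> : y = 0 := dotv_eq0 y w0.
    by rewrite !dotv0r mulr0 mul0r ltxx.
  have dp : 0 < dotv y y / mu2 - dotv s y.
    rewrite subr_gt0; apply: lt_le_trans hc _.
    rewrite ler_pM2r ?invr_gt0 //; nra.
  have et : dotv (th *: s + ((1 - th) / mu2) *: y) y = mu1 * dotv y y / mu2.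
    rewrite dotvDl !dotvZl /th; field.
    rewrite gt_eqF //=; apply/eqP => h0; move: dp; rewrite -(pmulr_lgt0 _ m2) mulrBl divfK ?gt_eqF //; lra.
  have s0 := dotv_ge0 (th *: s + ((1 - th) / mu2) *: y).
  apply: post => //; rewrite et; first by rewrite [X in _ <= X]mulrC divfK ?gt_eqF.
  have : 0 < mu1 * dotv y y / mu2 by rewrite !mulr_gt0 ?invr_gt0.
  nra.
- rewrite subrr mul0r scale0r addr0 scale1r.
  move/negbT: hc; rewrite -leNgt ler_pdivrMr // => hc.
  apply: post => //; first by rewrite [X in _ <= X]mulrC.
  have w0 := dotv_ge0 y; have s0 := dotv_ge0 s.
  have a0 : 0 <= dotv s y.
    have : 0 <= dotv s y * mu2 by apply: le_trans hc; rewrite mulr_ge0 // ltW.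
    by rewrite pmulr_lge0.
  have [ss0|ssn] := eqVneq (dotv s s) 0; last first.
    have : 0 < dotv s s by rewrite lt0r ssn.
    nra.
  have e0 : s = 0 := dotv_eq0 s ss0.
  move: hc nz; rewrite e0 dotvC dotv0r mul0r => hc.
  have : dotv y y = 0 by apply/eqP; rewrite eq_le w0 andbT -(pmulr_rle0 _ m1).
  by move/(dotv_eq0 y) ->; rewrite eqxx.
Qed.

Lemma upd_lower H s y (L mu3 : R) : 0 < L -> 0 < mu3 -> 0 < dotv s y ->
  mu3 * dotv y y <= dotv s y ->
  (forall z, dotv z z <= L * qf H z) ->
  forall x, dotv x x <= (L + mu3^-1) * qf (bfgs_upd H s y) x.
Proof.
move=> Lp m3 syp hy hH x; rewrite qf_upd.
set r := (dotv s y)^-1; set a := dotv s x; set z := x - (r * a) *: y.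
have rp : 0 < r by rewrite invr_gt0.
have rs : r * dotv s y = 1 by rewrite mulVf ?gt_eqF.
have ex : dotv x x = dotv z z + 2 * (r * a) * dotv z y + (r * a) ^+ 2 * dotv y y.
  by rewrite -dotv_sq /z subrK.
rewrite ex; set Q := qf H z.
have hz := hH z; have z0 := dotv_ge0 z; have y0 := dotv_ge0 y.
have Q0 : 0 <= Q by rewrite -(pmulr_rge0 _ Lp); apply: le_trans hz.
have cs := CS z y.
have ry : r * dotv y y <= mu3^-1.
  rewrite -(ler_pM2l m3) mulrCA mulrV ?unitf_gt0 // -rs ler_pM2l //.
have a20 : 0 <= r * a ^+ 2 by rewrite mulr_ge0 ?sqr_ge0 // ltW.
apply: (@le_trans _ _ ((L + r * dotv y y) * (Q + r * a ^+ 2))); last first.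
  by rewrite ler_wpM2r ?addr_ge0 // lerD2l.
rewrite -(ler_pM2l Lp).
have h1 : L * dotv z z <= L * (L * Q) by rewrite ler_pM2l.
have h2 : r * dotv y y * dotv z z <= r * dotv y y * (L * Q).
  by rewrite ler_wpM2l // mulr_ge0 // ltW.
have h3 : 0 <= r * ((L * a - dotv z y) ^+ 2 + (dotv z z * dotv y y - dotv z y ^+ 2)).
  apply: mulr_ge0; first exact: ltW. apply: addr_ge0; first exact: sqr_ge0. by rewrite subr_ge0.
have e : L * ((L + r * dotv y y) * (Q + r * a ^+ 2)) -
  L * (dotv z z + 2 * (r * a) * dotv z y + (r * a) ^+ 2 * dotv y y) =
  L * (L * Q - dotv z z) + (r * dotv y y * (L * Q) - r * dotv y y * dotv z z)
  + r * ((L * a - dotv z y) ^+ 2 + (dotv z z * dotv y y - dotv z y ^+ 2)).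
  ring.
rewrite -subr_ge0 e; apply: addr_ge0 => //; apply: addr_ge0.
  by apply: mulr_ge0; [exact: ltW | rewrite subr_ge0].
by rewrite subr_ge0.
Qed.

Lemma upd_upper H s y (c mu2 mu3 rr : R) : 0 <= c -> 0 < mu2 -> 0 < mu3 ->
  0 <= rr -> mu2 * mu3 * rr ^+ 2 = 1 -> 0 < dotv s y ->
  mu2 * dotv s s <= dotv s y -> mu3 * dotv y y <= dotv s y ->
  (forall z, qf H z <= c * dotv z z) ->
  forall x, qf (bfgs_upd H s y) x <= ((1 + rr) ^+ 2 * c + mu2^-1) * dotv x x.
Proof.
move=> c0 m2 m3 rr0 hrr syp hs hy hH x; rewrite qf_upd.
set r := (dotv s y)^-1; set a := dotv s x; set z := x - (r * a) *: y.
have rp : 0 < r by rewrite invr_gt0.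
have rs : r * dotv s y = 1 by rewrite mulVf ?gt_eqF.
have ez : dotv z z = dotv x x + 2 * (- (r * a)) * dotv x y + (r * a) ^+ 2 * dotv y y.
  by rewrite /z -scaleNr dotv_sq sqrrN.
have F1 : a ^+ 2 <= dotv s s * dotv x x by rewrite /a CS.
have F2 := CS x y.
have x0 := dotv_ge0 x; have y0 := dotv_ge0 y; have s0 := dotv_ge0 s.
have r2 : r ^+ 2 * dotv s s * dotv y y <= rr ^+ 2.
  have e1 : rr ^+ 2 = rr ^+ 2 * (r * dotv s y) ^+ 2 by rewrite rs expr1n mulr1.
  have e2 : r ^+ 2 * dotv s s * dotv y y
     = r ^+ 2 * dotv s s * dotv y y * (mu2 * mu3 * rr ^+ 2) by rewrite hrr mulr1.
  rewrite {1}e1 {1}e2.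
  have -> : r ^+ 2 * dotv s s * dotv y y * (mu2 * mu3 * rr ^+ 2) =
    (rr ^+ 2 * r ^+ 2) * ((mu2 * dotv s s) * (mu3 * dotv y y)) by ring.
  have -> : rr ^+ 2 * (r * dotv s y) ^+ 2 = (rr ^+ 2 * r ^+ 2) * (dotv s y * dotv s y)
    by ring.
  apply: ler_wpM2l; first by rewrite mulr_ge0 ?sqr_ge0.
  by apply: ler_pM => //; rewrite mulr_ge0 // ltW.
have i1 : (r * a) ^+ 2 * dotv y y <= rr ^+ 2 * dotv x x.
  apply: (@le_trans _ _ (r ^+ 2 * dotv s s * dotv y y * dotv x x)).
    have -> : r ^+ 2 * dotv s s * dotv y y * dotv x x =
      r ^+ 2 * ((dotv s s * dotv x x) * dotv y y) by ring.
    by rewrite exprMn -[X in X <= _]mulrA ler_wpM2l ?sqr_ge0 // ler_wpM2r.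
  by rewrite ler_wpM2r.
have i2 : - (r * a * dotv x y) <= rr * dotv x x.
  have hm : (r * a * dotv x y) ^+ 2 <= (rr * dotv x x) ^+ 2.
    apply: (@le_trans _ _ (r ^+ 2 * dotv s s * dotv y y * dotv x x ^+ 2)).
      have -> : (r * a * dotv x y) ^+ 2 = r ^+ 2 * (a ^+ 2 * dotv x y ^+ 2) by ring.
      have -> : r ^+ 2 * dotv s s * dotv y y * dotv x x ^+ 2 =
        r ^+ 2 * ((dotv s s * dotv x x) * (dotv x x * dotv y y)) by ring.
      by rewrite ler_wpM2l ?sqr_ge0 // ler_pM ?sqr_ge0.
    by rewrite exprMn ler_wpM2r ?sqr_ge0.
  have : 0 <= rr * dotv x x by rewrite mulr_ge0.
  nra.
have i3 : r * a ^+ 2 <= mu2^-1 * dotv x x.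
  apply: (@le_trans _ _ (r * dotv s s * dotv x x)).
    by rewrite -mulrA ler_wpM2l // ltW.
  rewrite ler_wpM2r // -(ler_pM2l m2) mulrV ?unitf_gt0 // mulrCA.
  by apply: (@le_trans _ _ (r * dotv s y)); [rewrite ler_pM2l | rewrite rs].
have zz : dotv z z <= (1 + rr) ^+ 2 * dotv x x by rewrite ez; lra.
have hz := hH z.
have hc : c * dotv z z <= c * ((1 + rr) ^+ 2 * dotv x x) by rewrite ler_wpM2l.
lra.
Qed.
End Aux.
Arguments qf {R d}.
Arguments damp_ok {R d}.
Arguments upd_upper {R d}.
Arguments upd_lower {R d}.
Arguments qfZ1 {R d}.
Arguments loewnerE {R d}.
Arguments dotv_ge0 {R d}.


Fixpoint Useq (R : rcfType) (m b u0 : R) n :=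
  if n is n'.+1 then m * Useq R m b u0 n' + b else u0.
Arguments Useq {R}.

Lemma Useq_ge0 {R : rcfType} (m b u0 : R) n : 0 <= m -> 0 <= b -> 0 <= u0 ->
  0 <= Useq m b u0 n.
Proof. move=> m0 b0 u0p; elim: n => //= n IH; rewrite addr_ge0 // mulr_ge0 //. Qed.

Lemma Useq_mono (R : rcfType) (m b u0 : R) i j : 1 <= m -> 0 <= b -> 0 <= u0 ->
  (i <= j)%N -> Useq m b u0 i <= Useq m b u0 j.
Proof.
move=> m1 b0 u0p /subnKC <-; elim: (j - i)%N => [|k IH]; first by rewrite addn0.
rewrite addnS /=; apply: le_trans IH _.
have := Useq_ge0 m b u0 (i + k)%N (le_trans ler01 m1) b0 u0p; set U := Useq _ _ _ _.
move=> U0; have : U <= m * U by rewrite ler_peMl.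
lra.
Qed.

Lemma Useq_closed (R : rcfType) (m b u0 : R) n : m != 1 ->
  Useq m b u0 n = u0 * m ^+ n + (m ^+ n - 1) / (m - 1) * b.
Proof.
move=> m1; have m1' : m - 1 != 0 by rewrite subr_eq0.
elim: n => [|n IH] /=; first by rewrite expr0 subrr mul0r mul0r addr0 mulr1.
rewrite IH exprS; field; exact: m1'.
Qed.

Theorem lemma3 (R : rcfType) (d : nat) (mu1 lamG : R) (p q : nat)
  (S Y : nat -> 'cV[R]_d) :
  0 < mu1 -> mu1 < 1 -> 0 < lamG -> (1 <= p)%N -> (q <= p)%N ->
  (forall i, (i < q)%N ->
     exists s y : 'cV[R]_d, (s, y) != (0, 0) /\ damp mu1 lamG s y = (S i, Y i)) ->
  let mu2 := lamG in
  let mu3 := mu1 / (mu2 * (1 + 2 * mu1)) in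
  let muh := (1 + (Num.sqrt (mu2 * mu3))^-1) ^+ 2 in
  let kappa_lo := (lamG + p%:R / mu3)^-1 in
  let kappa_hi := lamG^-1 * muh ^+ p + (muh ^+ p - 1) / (muh - 1) * mu2^-1 in
  loewner_le (kappa_lo *: 1%:M) (Hseq lamG S Y q) /\
  loewner_le (Hseq lamG S Y q) (kappa_hi *: 1%:M).
Proof.
move=> m1 m1' lp p1 qp hd mu2 mu3 muh kl kh.
have m3 : 0 < mu3 by rewrite /mu3 divr_gt0 // mulr_gt0 //; lra.
have hf : forall i, (i < q)%N -> (0 < dotv (S i) (Y i)) /\
    (mu2 * dotv (S i) (S i) <= dotv (S i) (Y i)) /\
    (mu3 * dotv (Y i) (Y i) <= dotv (S i) (Y i)).
  by move=> i /hd [s [y [nz e]]]; exact: damp_ok m1 m1' lp nz e.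
set rr := (Num.sqrt (mu2 * mu3))^-1.
have sq : 0 < Num.sqrt (mu2 * mu3) by rewrite sqrtr_gt0 mulr_gt0.
have rr0 : 0 < rr by rewrite invr_gt0.
have hrr : mu2 * mu3 * rr ^+ 2 = 1.
  rewrite /rr exprVn sqr_sqrtr; first by rewrite divff // gt_eqF // mulr_gt0.
  by rewrite mulr_ge0 // ltW.
have muhE : muh = (1 + rr) ^+ 2 by [].
have muh1 : 1 <= muh by rewrite muhE; nra.
have muhn1 : muh != 1 by rewrite muhE; apply/eqP => h; nra.
have hU : forall i, (i <= q)%N -> forall x,
    qf (Hseq lamG S Y i) x <= Useq muh mu2^-1 lamG^-1 i * dotv x x.
  elim => [|i IH] hi x /=; first by rewrite qfZ1.
  have [h1 [h2 h3]] := hf i hi.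
  have U0 : 0 <= Useq muh mu2^-1 lamG^-1 i.
    apply: Useq_ge0; [exact: le_trans ler01 muh1 | by rewrite invr_ge0 ltW | by rewrite invr_ge0 ltW].
  have := upd_upper (Hseq lamG S Y i) (S i) (Y i) _ mu2 mu3 rr U0 lp m3 (ltW rr0)
    hrr h1 h2 h3 (IH (ltnW hi)) x.
  by rewrite -muhE.
have hL : forall i, (i <= q)%N -> forall x,
    dotv x x <= (lamG + i%:R / mu3) * qf (Hseq lamG S Y i) x.
  elim => [|i IH] hi x /=.
    by rewrite qfZ1 mul0r addr0 mulrA mulfV ?gt_eqF // mul1r.
  have [h1 [h2 h3]] := hf i hi.
  have -> : lamG + i.+1%:R / mu3 = (lamG + i%:R / mu3) + mu3^-1.
    by rewrite -natr1 mulrDl mul1r addrA.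
  apply: upd_lower => //.
    by rewrite ltr_wpDr // divr_ge0 // ltW.
  by move=> z; apply: IH; apply: ltnW.
split; apply/loewnerE => x; rewrite qfZ1.
- have hx := hL q (leqnn q) x.
  have Lq : 0 < lamG + q%:R / mu3 by rewrite ltr_wpDr // divr_ge0 // ltW.
  have Lqp : lamG + q%:R / mu3 <= lamG + p%:R / mu3.
    by rewrite lerD2l ler_pM2r ?invr_gt0 // ler_nat.
  have Q0 : 0 <= qf (Hseq lamG S Y q) x.
    by rewrite -(pmulr_rge0 _ Lq); apply: le_trans hx; apply: dotv_ge0.
  rewrite /kl ler_pdivrMl; last exact: lt_le_trans Lqp.
  by apply: le_trans hx _; rewrite ler_wpM2r.
- apply: le_trans (hU q (leqnn q) x) _.
  rewrite ler_wpM2r ?dotv_ge0 //.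
  have -> : kh = Useq muh mu2^-1 lamG^-1 p by rewrite Useq_closed.
  by apply: Useq_mono => //; rewrite invr_ge0 ltW.
Qed.
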